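(* Consider the system, for environments $i=1,\dots,N$ and time steps $t=1,\dots,T$, $$x_{t+1}^{(i)} = f_0(x_t^{(i)}) + B(x_t^{(i)})u_t^{(i)} - f(x_t^{(i)},c^{(i)}) + w_t^{(i)},\qquad x_1^{(i)}=0,$$ under the standing assumptions described in the context (full actuation, $\|w_t^{(i)}\|\le W$, e-ISS of $f_0$ with constants $\beta,\gamma,\rho$). Assume the unknown dynamics has the form $f(x,c)=F(\phi(x;\Theta),c)$ for a known model $F(\phi(\cdot;\cdot),\cdot)$ and some true parameter $\Theta\in\mathcal{K}_1\subseteq\mathbb{R}^p$, with $c^{(i)}\in\mathcal{K}_2\subseteq\mathbb{R}^h$ for all $i$, where $\mathcal{K}_1,\mathcal{K}_2$ are convex sets, and assume each observed loss $\ell_t^{(i)}(\hat\Theta,\hat c)$ is differentiable and jointly convex in $(\hat\Theta,\hat c)$. Run OMAC in its convex instantiation (described in the context) with a meta-adapter $\mathcal{A}_1$ whose total regret is at most $T\cdot\varepsilon_1(N)$ and an inner-adapter $\mathcal{A}_2$ whose total regret is at most $N\cdot\varepsilon_2(T)$, where $\varepsilon_1(N)=o(N)$ and $\varepsilon_2(T)=o(T)$. Then $$\mathsf{ACE}:=\frac{1}{TN}\sum_{i=1}^N\sum_{t=1}^T\|x_t^{(i)}\| \le \frac{\gamma}{1-\rho}\sqrt{W^2+\frac{\varepsilon_2(T)}{T}+\frac{\varepsilon_1(N)}{N}}.$$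
   Context: Setting: states $x_t^{(i)}\in\mathbb{R}^n$, controls $u_t^{(i)}\in\mathbb{R}^m$, known $f_0:\mathbb{R}^n\to\mathbb{R}^n$, known $B:\mathbb{R}^n\to\mathbb{R}^{n\times m}$ with $\mathrm{rank}(B(x))=n$ for all $x$, unknown $f:\mathbb{R}^n\times\mathbb{R}^h\to\mathbb{R}^n$, unknown environment parameters $c^{(i)}$ (possibly chosen adversarially and adaptively), and disturbances $w_t^{(i)}$ (possibly adversarial) with $\|w_t^{(i)}\|\le W$. $f_0$ is exponentially input-to-state stable (e-ISS): there are $\beta,\gamma\ge0$, $0\le\rho<1$ such that for every $t$ and every $v_1,\dots,v_{t-1}\in\mathbb{R}^n$, the iterates $x_{k+1}=f_0(x_k)+v_k$ satisfy $\|x_t\|\le\beta\rho^{t-1}\|x_1\|+\gamma\sum_{k=1}^{t-1}\rho^{t-1-k}\|v_k\|$. Write $B_t^{(i)}=B(x_t^{(i)})$, $f_t^{(i)}=f(x_t^{(i)},c^{(i)})$. OMAC (convex instantiation): parameters $\hat\Theta^{(i)}\in\mathcal{K}_1$ (one per environment, $\hat\Theta^{(1)}\in\mathcal{K}_1$ initialized by $\mathcal{A}_1$) and $\hat c_t^{(i)}\in\mathcal{K}_2$ ($\hat c_1^{(i)}\in\mathcal{K}_2$ initialized by $\mathcal{A}_2$ in each environment). At step $(i,t)$ the controller computes $\hat f_t^{(i)}=F(\phi(x_t^{(i)};\hat\Theta^{(i)}),\hat c_t^{(i)})$, applies $u_t^{(i)}=B_t^{(i)\dagger}\hat f_t^{(i)}$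 ($\dagger$ = pseudo-inverse), observes $x_{t+1}^{(i)}$ and $y_t^{(i)}=f_0(x_t^{(i)})+B_t^{(i)}u_t^{(i)}-x_{t+1}^{(i)}=f_t^{(i)}-w_t^{(i)}$, and forms the loss $\ell_t^{(i)}(\hat\Theta,\hat c)=\|F(\phi(x_t^{(i)};\hat\Theta),\hat c)-y_t^{(i)}\|^2$. The inner cost is the linear function $g_t^{(i)}(\hat c)=\nabla_{\hat c}\ell_t^{(i)}(\hat\Theta^{(i)},\hat c_t^{(i)})\cdot\hat c$ and $\mathcal{A}_2$ produces $\hat c_{t+1}^{(i)}\in\mathcal{K}_2$ from $\hat c_t^{(i)}$ and $g_{1:t}^{(i)}$. At the end of environment $i$, the outer cost is $G^{(i)}(\hat\Theta)=\sum_{t=1}^T\nabla_{\hat\Theta}\ell_t^{(i)}(\hat\Theta^{(i)},\hat c_t^{(i)})\cdot\hat\Theta$ and $\mathcal{A}_1$ produces $\hat\Theta^{(i+1)}\in\mathcal{K}_1$ from $\hat\Theta^{(i)}$ and $G^{(1:i)}$. The parameters $c^{(i)}$ are never observed by the controller. Total regret of $\mathcal{A}_1$: $\sum_{i=1}^N G^{(i)}(\hat\Theta^{(i)})-\min_{\Theta'\in\mathcal{K}_1}\sum_{i=1}^N G^{(i)}(\Theta')$. Total regret of $\mathcal{A}_2$: $\sum_{i=1}^N\big[\sum_{t=1}^T g_t^{(i)}(\hat c_t^{(i)})-\min_{c'\in\mathcal{K}_2}\sum_{t=1}^T g_t^{(i)}(c')\big]$. *)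

(* Defs.v *)
From HB Require Import structures.
From mathcomp Require Import all_boot all_order all_algebra.
From mathcomp Require Import all_classical all_reals all_analysis.
Set Implicit Arguments. Unset Strict Implicit. Unset Printing Implicit Defensive.
Import Order.TTheory GRing.Theory Num.Theory.
Import numFieldNormedType.Exports.
Local Open Scope ring_scope.
Local Open Scope classical_set_scope.

Notation vec R n := 'cV[R]_n.

Definition enorm (R : realType) (n : nat) (v : vec R n) : R :=
  Num.sqrt (\sum_(j < n) v j 0 ^+ 2).

(* Moore-Penrose pseudo-inverse, characterized by the four Penrose equations
   (real case: conjugate transpose = transpose). It exists and is unique. *)
Definition is_pseudo_inverse (R : realType) (n m : nat)
    (A : 'M[R]_(n, m)) (X : 'M[R]_(m, n)) : Prop :=
  [/\ A *m X *m A = A, X *m A *m X = X,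
      (A *m X)^T = A *m X & (X *m A)^T = X *m A].

Definition eISS (R : realType) (n : nat) (f0 : vec R n -> vec R n)
    (beta gamma rho : R) : Prop :=
  [/\ 0 <= beta, 0 <= gamma, 0 <= rho, rho < 1 &
    forall (x v : nat -> vec R n),
      (forall k, x k.+1 = f0 (x k) + v k) ->
      forall t, (1 <= t)%N ->
        enorm (x t) <= beta * rho ^+ t.-1 * enorm (x 1%N)
          + gamma * \sum_(1 <= k < t) rho ^+ (t.-1 - k) * enorm (v k)].

Definition convex_vset (R : realType) (p : nat) (K : set (vec R p)) : Prop :=
  forall a b (s : R), K a -> K b -> 0 <= s <= 1 -> K ((1 - s) *: a + s *: b).

Definition jointly_convex (R : realType) (p h : nat)
    (l : vec R p * vec R h -> R) : Prop :=
  forall a b (s : R), 0 <= s <= 1 ->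
    l ((1 - s) *: a.1 + s *: b.1, (1 - s) *: a.2 + s *: b.2)
      <= (1 - s) * l a + s * l b.

Definition omac_loss (R : realType) (n p h : nat) (Phi : Type)
    (phi : vec R n -> vec R p -> Phi) (F : Phi -> vec R h -> vec R n)
    (x y : vec R n) : vec R p * vec R h -> R :=
  fun z => enorm (F (phi x z.1) z.2 - y) ^+ 2.


(* ---- OMAC closed loop (convex instantiation) ----
   Indices: environments i = 1..N, time steps t = 1..T (natural numbers).
   x i t : state, u i t : control, Th i : meta parameter Theta^(i),
   ch i t : inner parameter c^_t^(i). *)

Definition omac_y (R : realType) (n m : nat) (f0 : vec R n -> vec R n)
    (B : vec R n -> 'M[R]_(n, m)) (x : nat -> nat -> vec R n)
    (u : nat -> nat -> vec R m) (i t : nat) : vec R n :=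
  f0 (x i t) + B (x i t) *m u i t - x i t.+1.

Definition omac_lt (R : realType) (n m p h : nat) (Phi : Type)
    (phi : vec R n -> vec R p -> Phi) (F : Phi -> vec R h -> vec R n)
    (f0 : vec R n -> vec R n) (B : vec R n -> 'M[R]_(n, m))
    (x : nat -> nat -> vec R n) (u : nat -> nat -> vec R m) (i t : nat)
    : vec R p * vec R h -> R^o :=
  omac_loss phi F (x i t) (omac_y f0 B x u i t).

(* inner linear cost g_t^(i)(c) = grad_c l_t^(i)(Th^(i), c^_t^(i)) . c,
   i.e. the differential of l_t^(i) at (Th^(i), c^_t^(i)) applied to (0, c). *)
Definition omac_g (R : realType) (n m p h : nat) (Phi : Type)
    (phi : vec R n -> vec R p -> Phi) (F : Phi -> vec R h -> vec R n)
    (f0 : vec R n -> vec R n) (B : vec R n -> 'M[R]_(n, m))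
    (x : nat -> nat -> vec R n) (u : nat -> nat -> vec R m)
    (Th : nat -> vec R p) (ch : nat -> nat -> vec R h) (i t : nat)
    : vec R h -> R :=
  fun c => 'd (omac_lt phi F f0 B x u i t) (Th i, ch i t) (0, c).

(* outer linear cost G^(i)(Th) = sum_{t=1}^T grad_Th l_t^(i)(Th^(i), c^_t^(i)) . Th *)
Definition omac_G (R : realType) (n m p h : nat) (Phi : Type)
    (phi : vec R n -> vec R p -> Phi) (F : Phi -> vec R h -> vec R n)
    (f0 : vec R n -> vec R n) (B : vec R n -> 'M[R]_(n, m))
    (x : nat -> nat -> vec R n) (u : nat -> nat -> vec R m)
    (Th : nat -> vec R p) (ch : nat -> nat -> vec R h) (T i : nat)
    : vec R p -> R :=
  fun Th' => \sum_(1 <= t < T.+1)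
    'd (omac_lt phi F f0 B x u i t) (Th i, ch i t) (Th', 0).

(* A1 : (current Theta^, past outer costs G^(1:i)) -> next Theta^, A1init its
   initial output; A2 : (current c^, past inner costs g_(1:t)) -> next c^,
   A2init its initial output (used in each environment). *)
Definition omac_run (R : realType) (n m p h : nat) (Phi : Type)
    (f0 : vec R n -> vec R n) (B : vec R n -> 'M[R]_(n, m))
    (Bdag : vec R n -> 'M[R]_(m, n))
    (f : vec R n -> vec R h -> vec R n)
    (phi : vec R n -> vec R p -> Phi) (F : Phi -> vec R h -> vec R n)
    (A1init : vec R p) (A1 : vec R p -> seq (vec R p -> R) -> vec R p)
    (A2init : vec R h) (A2 : vec R h -> seq (vec R h -> R) -> vec R h)
    (N T : nat) (c : nat -> vec R h) (w : nat -> nat -> vec R n)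
    (x : nat -> nat -> vec R n) (u : nat -> nat -> vec R m)
    (Th : nat -> vec R p) (ch : nat -> nat -> vec R h) : Prop :=
  [/\
      forall i, (1 <= i <= N)%N -> x i 1%N = 0,
      forall i t, (1 <= i <= N)%N -> (1 <= t <= T)%N ->
        x i t.+1 = f0 (x i t) + B (x i t) *m u i t - f (x i t) (c i) + w i t,
      forall i t, (1 <= i <= N)%N -> (1 <= t <= T)%N ->
        u i t = Bdag (x i t) *m F (phi (x i t) (Th i)) (ch i t),
      Th 1%N = A1init /\
      (forall i, (1 <= i < N)%N ->
        Th i.+1 = A1 (Th i)
          [seq omac_G phi F f0 B x u Th ch T j | j <- iota 1 i]) &
      forall i, (1 <= i <= N)%N ->
        ch i 1%N = A2init /\
        (forall t, (1 <= t < T)%N ->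
          ch i t.+1 = A2 (ch i t)
            [seq omac_g phi F f0 B x u Th ch i s | s <- iota 1 t])].

(* Main.v *)
Require Import Defs.
From HB Require Import structures.
From mathcomp Require Import all_boot all_order all_algebra.
From mathcomp Require Import all_classical all_reals all_analysis.
From mathcomp Require Import lra ring.
Import Order.TTheory GRing.Theory Num.Theory.
Import numFieldNormedType.Exports.
Local Open Scope ring_scope.
Local Open Scope classical_set_scope.

Lemma cvx_grad (R : realType) (p h : nat) (l : vec R p * vec R h -> R^o) a b :
  differentiable l a -> jointly_convex l -> 'd l a (b - a) <= l b - l a.
Proof.
move=> dl cvx.
have := @diff_derivable _ _ _ l a (b - a) dl.
move=> /cvg_ex [D HD] /=.
rewrite -deriveE //.
have HD' : (fun t : R => t^-1 *: ((l \o shift a) (t *: (b - a)) - l a)) @ 0^'+ --> D.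
  have sub : ((0:R)^'+ : set_system R) `=>` (0:R)^'.
    move=> A; rewrite /dnbhs /within /=; apply: filterS => y Hy Hy0; apply: Hy; by rewrite gt_eqF.
  exact: cvg_trans (cvg_app _ sub) HD.
have -> : 'D_(b - a) l a = D.
  rewrite /derive. exact: cvg_lim HD.
rewrite -(cvg_lim _ HD') //.
apply: limr_le; first by apply/cvg_ex; exists D.
near=> s.
have s0 : 0 < s by near: s; exact: nbhs_right_gt.
have s1 : s < 1 by near: s; exact: nbhs_right_lt.
have := cvx a b s.
have -> : ((1 - s) *: a.1 + s *: b.1, (1 - s) *: a.2 + s *: b.2) = s *: (b - a) + a.
  by rewrite [RHS]surjective_pairing /=; congr pair;
    rewrite scalerBl scale1r scalerBr addrAC [RHS]addrC addrA.
move=> H.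
have {}H : l (s *: (b - a) + a) <= (1 - s) * l a + s * l b by apply: H; rewrite !ltW.
rewrite /= -[_ *: _]/(s^-1 * _) mulrC ler_pdivrMr //.
nra.
Unshelve. all: by end_near. Qed.

Lemma BBdag (R : realType) (n m : nat) (B : 'M[R]_(n, m)) X :
  \rank B = n -> is_pseudo_inverse B X -> B *m X = 1%:M.
Proof.
move=> rk [H1 _ _ _].
have fr : row_free B by rewrite -row_leq_rank rk.
apply/eqP; rewrite -subr_eq0 -(mulmx_free_eq0 _ fr).
by rewrite mulmxBl H1 mul1mx subrr.
Qed.

Fixpoint conv (R : realType) (rho : R) (a : nat -> R) (t : nat) : R :=
  match t with
  | 0 => 0
  | 1 => 0
  | S ((S _) as t1) => rho * conv R rho a t1 + a t1
  end.
Arguments conv {R}.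

Lemma conv_sum (R : realType) (rho : R) a t :
  \sum_(1 <= k < t) rho ^+ (t.-1 - k) * a k = conv rho a t.
Proof.
elim: t => [|t IH]; first by rewrite big_geq.
case: t IH => [|t] IH; first by rewrite big_geq.
change (conv rho a t.+2) with (rho * conv rho a t.+1 + a t.+1).
rewrite -IH big_nat_recr // big_distrr /=. rewrite subnn expr0 mul1r.
congr (_ + _); apply: eq_big_nat => k /andP [_ kt].
by rewrite mulrA -exprS; congr (_ ^+ _ * _); rewrite subSn.
Qed.

Lemma conv_ge0 (R : realType) (rho : R) a t :
  0 <= rho -> (forall k, 0 <= a k) -> 0 <= conv rho a t.
Proof.
move=> r0 a0; elim: t => [|[|t] IH] //=.
by rewrite addr_ge0 // mulr_ge0.
Qed.

Lemma conv_tot (R : realType) (rho : R) a T :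
  (1 - rho) * \sum_(1 <= t < T.+1) conv rho a t
  = \sum_(1 <= t < T.+1) a t - conv rho a T.+1.
Proof.
elim: T => [|T IH]; first by rewrite !big_geq //= mulr0 subr0.
change (conv rho a T.+2) with (rho * conv rho a T.+1 + a T.+1).
rewrite big_nat_recr // [in RHS]big_nat_recr //.
move: (conv rho a T.+1) IH => u IH /=.
rewrite mulrDr IH; ring.
Qed.

Lemma amgm (R : realType) (S1 S2 M Q : R) :
  0 < M -> 0 <= S1 -> S2 <= M * Q ->
  (forall lam, 0 < lam -> 2 * lam * S1 <= S2 + lam ^+ 2 * M) ->
  S1 <= M * Num.sqrt Q.
Proof.
move=> M0 S10 S2Q H.
have [Q0|Q0] := ltP 0 Q.
  have sq0 : 0 < Num.sqrt Q by rewrite sqrtr_gt0.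
  have sq2 : Num.sqrt Q ^+ 2 = Q by rewrite sqr_sqrtr // ltW.
  have := H _ sq0; rewrite sq2 => H1.
  nra.
rewrite (ler0_sqrtr Q0) mulr0.
have [S1p|] := ltP 0 S1; last by [].
have lp : 0 < S1 / M by rewrite divr_gt0.
have := H _ lp.
have e : (S1 / M) ^+ 2 * M = S1 ^+ 2 / M by field; rewrite gt_eqF.
rewrite e => H1.
have e2 : 2 * (S1 / M) * S1 = 2 * (S1 ^+ 2 / M) by field; rewrite gt_eqF.
have p0 : 0 < S1 ^+ 2 / M by rewrite divr_gt0 // exprn_gt0.
have MQ : M * Q <= 0 by nra.
move: H1; rewrite e2; lra.
Qed.

Lemma zid1 (V : zmodType) (a b c : V) : b - (a + b - c) = c - a.
Proof. by rewrite [a + b]addrC -addrA opprD addrA subrr sub0r opprB. Qed.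
Lemma zid2 (V : zmodType) (A ff w : V) : ff - (A - (A - ff + w)) = w.
Proof. by rewrite opprB addrAC (addrAC A) subrr add0r addNKr. Qed.
Lemma zid3 (V : zmodType) (A ff w : V) : A - ff + w - (A - ff) = w.
Proof. by rewrite addrC addrA addNr add0r. Qed.

Lemma enorm_ge0 (R : realType) (n : nat) (v : vec R n) : 0 <= enorm v.
Proof. exact: sqrtr_ge0. Qed.

Lemma enorm0 (R : realType) (n : nat) : enorm (0 : vec R n) = 0.
Proof.
rewrite /enorm (eq_bigr (fun _ => 0)) ?big1 ?sqrtr0 // => j _.
by rewrite mxE expr0n.
Qed.

Lemma dsum_const (R : realType) (N T : nat) (k : R) :
  \sum_(1 <= i < N.+1) \sum_(1 <= t < T.+1) k = (T * N)%:R * k.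
Proof.
rewrite !sumr_const_nat !subn1 /= -mulrnA mulr_natl.
by rewrite mulnC.
Qed.

Theorem theorem3 (R : realType) (n m p h : nat) (Phi : Type)
    (f0 : vec R n -> vec R n) (B : vec R n -> 'M[R]_(n, m))
    (Bdag : vec R n -> 'M[R]_(m, n))
    (f : vec R n -> vec R h -> vec R n)
    (phi : vec R n -> vec R p -> Phi) (F : Phi -> vec R h -> vec R n)
    (Theta : vec R p) (K1 : set (vec R p)) (K2 : set (vec R h))
    (beta gamma rho W : R)
    (A1init : vec R p) (A1 : vec R p -> seq (vec R p -> R) -> vec R p)
    (A2init : vec R h) (A2 : vec R h -> seq (vec R h -> R) -> vec R h)
    (eps1 eps2 : nat -> R)
    (N T : nat) (c : nat -> vec R h) (w : nat -> nat -> vec R n)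
    (x : nat -> nat -> vec R n) (u : nat -> nat -> vec R m)
    (Th : nat -> vec R p) (ch : nat -> nat -> vec R h) :
  (forall z, \rank (B z) = n) ->
  (forall z, is_pseudo_inverse (B z) (Bdag z)) ->
  eISS f0 beta gamma rho ->
  (0 < N)%N -> (0 < T)%N ->
  (forall i t, (1 <= i <= N)%N -> (1 <= t <= T)%N -> enorm (w i t) <= W) ->
  convex_vset K1 -> convex_vset K2 ->
  K1 Theta ->
  (forall i, (1 <= i <= N)%N -> K2 (c i)) ->
  (forall z cc, f z cc = F (phi z Theta) cc) ->
  K1 A1init -> (forall th Gs, K1 th -> K1 (A1 th Gs)) ->
  K2 A2init -> (forall cc gs, K2 cc -> K2 (A2 cc gs)) ->
  omac_run f0 B Bdag f phi F A1init A1 A2init A2 N T c w x u Th ch ->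
  (forall i t, (1 <= i <= N)%N -> (1 <= t <= T)%N ->
     (forall z, differentiable (omac_lt phi F f0 B x u i t) z) /\
     jointly_convex (omac_lt phi F f0 B x u i t)) ->
  (forall Th', K1 Th' ->
     \sum_(1 <= i < N.+1) omac_G phi F f0 B x u Th ch T i (Th i)
     - \sum_(1 <= i < N.+1) omac_G phi F f0 B x u Th ch T i Th'
     <= T%:R * eps1 N) ->
  (forall c' : nat -> vec R h, (forall i, K2 (c' i)) ->
     \sum_(1 <= i < N.+1)
       (\sum_(1 <= t < T.+1) omac_g phi F f0 B x u Th ch i t (ch i t)
        - \sum_(1 <= t < T.+1) omac_g phi F f0 B x u Th ch i t (c' i))
     <= N%:R * eps2 T) ->
  (fun k => eps1 k / k%:R) @ \oo --> (0 : R) ->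
  (fun k => eps2 k / k%:R) @ \oo --> (0 : R) ->
  (T * N)%:R^-1 * \sum_(1 <= i < N.+1) \sum_(1 <= t < T.+1) enorm (x i t)
    <= gamma / (1 - rho)
       * Num.sqrt (W ^+ 2 + eps2 T / T%:R + eps1 N / N%:R).
Proof.
move=> rkB pinv [b0 g0 r0 r1 iss] N0 T0 wW _ _ KTh Kc fF _ _ KA2i _
  [x1 dyn ctl _ _] lossH reg1 reg2 _ _.
set v := fun i t => x i t.+1 - f0 (x i t).
set a := fun i t => enorm (v i t).
set M : R := (T * N)%:R.
set Q := W ^+ 2 + eps2 T / T%:R + eps1 N / N%:R.
have M0 : 0 < M by rewrite /M ltr0n muln_gt0 T0 N0.
have a0 : forall i t, 0 <= a i t by move=> i t; exact: enorm_ge0.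
have Bu : forall i t, (1 <= i <= N)%N -> (1 <= t <= T)%N ->
    B (x i t) *m u i t = F (phi (x i t) (Th i)) (ch i t).
  move=> i t Hi Ht; rewrite ctl // mulmxA BBdag // mul1mx //.
have Lcur : forall i t, (1 <= i <= N)%N -> (1 <= t <= T)%N ->
    omac_lt phi F f0 B x u i t (Th i, ch i t) = a i t ^+ 2.
  move=> i t Hi Ht; rewrite /omac_lt /omac_loss /omac_y /= Bu // /a /v.
  by congr (enorm _ ^+ 2); rewrite zid1.
have Ltrue : forall i t, (1 <= i <= N)%N -> (1 <= t <= T)%N ->
    omac_lt phi F f0 B x u i t (Theta, c i) = enorm (w i t) ^+ 2.
  move=> i t Hi Ht; rewrite /omac_lt /omac_loss /omac_y /= dyn // -fF.
  congr (enorm _ ^+ 2).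
  by rewrite zid2.
have term : forall i t, (1 <= i <= N)%N -> (1 <= t <= T)%N ->
   a i t ^+ 2 - enorm (w i t) ^+ 2 <=
   ('d (omac_lt phi F f0 B x u i t) (Th i, ch i t) (Th i, 0)
    - 'd (omac_lt phi F f0 B x u i t) (Th i, ch i t) (Theta, 0))
   + (omac_g phi F f0 B x u Th ch i t (ch i t) - omac_g phi F f0 B x u Th ch i t (c i)).
  move=> i t Hi Ht; have [dl cv] := lossH i t Hi Ht.
  have := @cvx_grad _ _ _ _ (Th i, ch i t) (Theta, c i) (dl _) cv.
  rewrite Lcur // Ltrue // /omac_g.
  have -> : ((Theta, c i) - (Th i, ch i t) : vec R p * vec R h)
     = ((Theta, 0) - (Th i, 0)) + ((0, c i) - (0, ch i t)).
    rewrite [LHS]surjective_pairing [RHS]surjective_pairing /=.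
    by congr pair; rewrite subrr ?addr0 ?add0r.
  rewrite linearD !linearB /=.
  lra.
set X := fun i t => 'd (omac_lt phi F f0 B x u i t) (Th i, ch i t) (Th i, 0)
    - 'd (omac_lt phi F f0 B x u i t) (Th i, ch i t) (Theta, 0).
set Y := fun i t => omac_g phi F f0 B x u Th ch i t (ch i t) - omac_g phi F f0 B x u Th ch i t (c i).
have step1 : \sum_(1 <= i < N.+1) \sum_(1 <= t < T.+1) a i t ^+ 2 <=
    \sum_(1 <= i < N.+1) \sum_(1 <= t < T.+1) (W ^+ 2 + (X i t + Y i t)).
  apply: ler_sum_nat => i Hi; apply: ler_sum_nat => t Ht.
  have := term i t Hi Ht; have := wW i t Hi Ht; have := @enorm_ge0 _ _ (w i t).
  rewrite /X /Y; nra.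
have step2 : \sum_(1 <= i < N.+1) \sum_(1 <= t < T.+1) (W ^+ 2 + (X i t + Y i t))
   = M * W ^+ 2 + (\sum_(1 <= i < N.+1) omac_G phi F f0 B x u Th ch T i (Th i)
     - \sum_(1 <= i < N.+1) omac_G phi F f0 B x u Th ch T i Theta)
   + \sum_(1 <= i < N.+1)
       (\sum_(1 <= t < T.+1) omac_g phi F f0 B x u Th ch i t (ch i t)
        - \sum_(1 <= t < T.+1) omac_g phi F f0 B x u Th ch i t (c i)).
  rewrite /M -dsum_const -sumrB -!big_split; apply: eq_bigr => i _.
  rewrite /omac_G -!sumrB -!big_split; apply: eq_bigr => t _.
  by rewrite /X /Y addrA.
set c' := fun i => if (1 <= i <= N)%N then c i else A2init.
have Kc' : forall i, K2 (c' i) by move=> i; rewrite /c'; case: ifP => // /Kc.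
have e3 : \sum_(1 <= i < N.+1)
       (\sum_(1 <= t < T.+1) omac_g phi F f0 B x u Th ch i t (ch i t)
        - \sum_(1 <= t < T.+1) omac_g phi F f0 B x u Th ch i t (c i))
   = \sum_(1 <= i < N.+1)
       (\sum_(1 <= t < T.+1) omac_g phi F f0 B x u Th ch i t (ch i t)
        - \sum_(1 <= t < T.+1) omac_g phi F f0 B x u Th ch i t (c' i)).
  by apply: eq_big_nat => i Hi; rewrite /c' Hi.
have S2b : \sum_(1 <= i < N.+1) \sum_(1 <= t < T.+1) a i t ^+ 2 <= M * Q.
  have -> : M * Q = M * W ^+ 2 + T%:R * eps1 N + N%:R * eps2 T.
    rewrite /M /Q natrM; field.
    by rewrite !pnatr_eq0 -!lt0n N0 T0.
  apply: (le_trans step1); rewrite step2 e3.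
  have := reg1 _ KTh; have := reg2 _ Kc'; lra.
have xb : forall i t, (1 <= i <= N)%N -> (1 <= t <= T)%N ->
    enorm (x i t) <= gamma * conv rho (a i) t.
  move=> i t Hi /andP [Ht _].
  have := iss (x i) (v i) _ t Ht.
  have rec : forall k, x i k.+1 = f0 (x i k) + v i k by move=> k; rewrite /v addrC subrK.
  move=> /(_ rec) H; apply: (le_trans H).
  rewrite x1 // enorm0 mulr0 add0r -conv_sum; exact: lexx.
have r1' : 0 < 1 - rho by rewrite subr_gt0.
have gr0 : 0 <= gamma / (1 - rho) by rewrite divr_ge0 // ltW.
have xsum : forall i, (1 <= i <= N)%N ->
    \sum_(1 <= t < T.+1) enorm (x i t) <= gamma / (1 - rho) * \sum_(1 <= t < T.+1) a i t.
  move=> i Hi.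
  apply: (@le_trans _ _ (gamma * \sum_(1 <= t < T.+1) conv rho (a i) t)).
    rewrite mulr_sumr; apply: ler_sum_nat => t Ht; exact: xb.
  have ct := @conv_tot _ rho (a i) T.
  have cg := @conv_ge0 _ rho (a i) T.+1 r0 (a0 i).
  have : \sum_(1 <= t < T.+1) conv rho (a i) t <= (\sum_(1 <= t < T.+1) a i t) / (1 - rho).
    rewrite ler_pdivlMr // mulrC ct; lra.
  move=> H; rewrite mulrAC; rewrite -[X in _ <= X]mulrA. 
  by apply: ler_wpM2l.
set S1 := \sum_(1 <= i < N.+1) \sum_(1 <= t < T.+1) a i t.
have S1b : S1 <= M * Num.sqrt Q.
  apply: (@amgm _ _ _ _ _ M0 _ S2b).
    by apply: sumr_ge0 => i _; apply: sumr_ge0 => t _.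
  move=> lam lam0.
  rewrite [lam ^+ 2 * M]mulrC /M -(@dsum_const _ N T) /S1 mulr_sumr -big_split; apply: ler_sum_nat => i _.
  rewrite mulr_sumr -big_split; apply: ler_sum_nat => t _ /=.
  move: (a i t) => z; have := sqr_ge0 (z - lam); rewrite sqrrB; lra.
rewrite ler_pdivrMl //.
apply: (@le_trans _ _ (gamma / (1 - rho) * S1)).
  rewrite /S1 mulr_sumr; apply: ler_sum_nat => i Hi; exact: xsum.
rewrite mulrCA; exact: ler_wpM2l.
Qed.
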